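(* Let $r\ge 2$, $t$ and $s$ be positive integers with $\binom{8r^2}{r} \le s \le \beta_r \binom{t}{r}$, where $\beta_r := (12r)^{-r/(r-1)}$. Then \[ P_2(\mathcal{C}(s,r)) \le \tfrac{1}{2}\, P_2(\mathcal{L}(s,r,t)). \]
   Context: For a hypergraph $H$, $P_2(H)=\sum_x d(x)^2$ with $d(x)$ the number of edges containing $x$. The colex order on $r$-subsets of $\mathbb{N}$ is $A<B$ iff $\sum_{i\in A}2^i<\sum_{i\in B}2^i$, and $\mathcal{C}(s,r)$ is the family of the first $s$ $r$-subsets of $\mathbb{N}$ in colex order. The lex order on $[t]^{(r)}$ (the $r$-subsets of $\{1,\dots,t\}$) is $A<B$ iff $\min(A\triangle B)\in A$, and $\mathcal{L}(s,r,t)$ is the $r$-graph on $[t]$ consisting of the first $s$ sets of $[t]^{(r)}$ in lex order. *)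

(* Defs.v *)
From Stdlib Require Import Reals.
From mathcomp Require Import all_boot.
Set Implicit Arguments. Unset Strict Implicit. Unset Printing Implicit Defensive.

Definition deg n (H : {set {set 'I_n}}) (x : 'I_n) : nat :=
  #|[set e in H | x \in e]|.
Definition P2 n (H : {set {set 'I_n}}) : nat := \sum_(x : 'I_n) deg H x ^ 2.

Definition colex_code n (A : {set 'I_n}) : nat := \sum_(i in A) 2 ^ i.
Definition colex_lt n (A B : {set 'I_n}) : bool := colex_code A < colex_code B.

Definition colex_init (n s r : nat) : {set {set 'I_n}} :=
  [set A : {set 'I_n} | (#|A| == r) &&
     (#|[set B : {set 'I_n} | (#|B| == r) && colex_lt B A]| < s)].

(* C(s,r): the first s r-subsets of N in colex order.  All of them lie in
   {0,...,s+r-1} (since binomial (s+r) r > s), and for subsets of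
   {0,..,N-1} the colex rank among r-subsets of N equals the colex rank among
   r-subsets of {0,..,N-1}; so C(s,r) is represented on the vertex set 'I_(s+r)
   (vertices outside have degree 0 and do not contribute to P_2). *)
Definition colexC (s r : nat) : {set {set 'I_(s + r)}} := colex_init (s + r) s r.

Definition lex_lt t (A B : {set 'I_t}) : bool :=
  [exists x : 'I_t, [&& x \in A, x \notin B &
     [forall y : 'I_t, (y < x) ==> ((y \in A) == (y \in B))]]].

Definition lexL (s r t : nat) : {set {set 'I_t}} :=
  [set A : {set 'I_t} | (#|A| == r) &&
     (#|[set B : {set 'I_t} | (#|B| == r) && lex_lt B A]| < s)].

Definition beta (r : nat) : R :=
  Rpower (Rmult 12 (INR r)) (Ropp (Rdiv (INR r) (Rminus (INR r) 1))).

(* Main.v *)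
Require Import Defs.
From Stdlib Require Import Reals Lra.
From mathcomp Require Import all_boot zify.
Set Implicit Arguments. Unset Strict Implicit. Unset Printing Implicit Defensive.

Lemma sum_pow2 x : (\sum_(i < x) 2 ^ i).+1 = 2 ^ x.
Proof.
elim: x => [|x IH]; first by rewrite big_ord0.
by rewrite big_ord_recr /= -addSn IH expnS; lia.
Qed.

Lemma sum_pow2_ord n (x : nat) (P : pred 'I_n) :
  \sum_(i < n | P i && (i < x)) 2 ^ i < 2 ^ x.
Proof.
case: (leqP x n) => hx.
  rewrite -(sum_pow2 x) ltnS (big_ord_widen _ (fun i => 2 ^ i) hx).
  rewrite [X in _ <= X](bigID P) /= (eq_bigl (fun i : 'I_n => (i < x) && P i)); last by move=> i; rewrite andbC.
  exact: leq_addr.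
apply: (@leq_trans (2 ^ n)).
  rewrite -(sum_pow2 n) ltnS; rewrite [X in _ <= X](bigID (fun i : 'I_n => P i && (i < x))) /=.
  exact: leq_addr.
by rewrite leq_exp2l // ltnW.
Qed.

Lemma code_lt n (A B : {set 'I_n}) (x : 'I_n) : x \in B -> x \notin A ->
  (forall y : 'I_n, x < y -> (y \in A) = (y \in B)) -> colex_code A < colex_code B.
Proof.
move=> xB xA agr; rewrite /colex_code.
rewrite (bigID (fun i : 'I_n => i < x)) /= [X in _ < X](bigID (fun i : 'I_n => i <= x)) /=.
have -> : \sum_(i in A | ~~ (i < x)) 2 ^ i = \sum_(i in B | ~~ (i <= x)) 2 ^ i.
  apply: eq_bigl => i; rewrite -leqNgt -ltnNge.
  case: (ltngtP x i) => h /=; rewrite ?andbT ?andbF //.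
    by rewrite agr.
  by move/val_inj: h => <-; apply/negbTE.
rewrite ltn_add2r.
apply: (@leq_trans (2 ^ x)).
  exact: (sum_pow2_ord x (fun i => i \in A)).
by rewrite (bigD1 x) //= ?leq_addr // xB leqnn.
Qed.

Lemma colex_code_inj n : injective (@colex_code n).
Proof.
move=> A B eqAB; apply/eqP; rewrite eqEsubset; apply/negPn/negP => /nandP h.
pose D := (A :\: B) :|: (B :\: A).
have [x0 Dx0] : exists x, x \in D.
  case: h => [/subsetPn [x xA xB] | /subsetPn [x xB xA]]; exists x.
    by rewrite !inE xA xB.
  by rewrite !inE xA xB orbT.
case: (@arg_maxnP _ x0 (fun x => x \in D) val Dx0) => x Dx xmax.
have agr : forall y : 'I_n, x < y -> (y \in A) = (y \in B).
  move=> y xy; apply/idP/idP => hy; apply/negPn/negP => hny.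
    have : y \in D by rewrite !inE hy hny.
    by move/xmax => /= hh; lia.
  have : y \in D by rewrite !inE hy hny orbT.
  by move/xmax => /= hh; lia.
move: Dx; rewrite !inE => /orP [/andP [xB xA] | /andP [xA xB]].
  by move: (code_lt xA xB (fun y h => esym (agr y h))); rewrite eqAB ltnn.
by move: (code_lt xB xA agr); rewrite eqAB ltnn.
Qed.

Definition lcode t (A : {set 'I_t}) := colex_code (@rev_ord t @: A).

Lemma lex_code t (A B : {set 'I_t}) : lex_lt A B -> lcode B < lcode A.
Proof.
case/existsP => x /and3P [xA xB /forallP agr].
apply: (@code_lt _ _ _ (rev_ord x)); rewrite ?mem_imset //; try exact: rev_ord_inj.
move=> z hz; rewrite -[z]rev_ordK !mem_imset; try exact: rev_ord_inj.
have : rev_ord z < x by move: hz; rewrite /=; have := ltn_ord x; have := ltn_ord z; lia.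
by move/implyP: (agr (rev_ord z)) => h /h /eqP.
Qed.

Lemma rank_lemma (T : finType) (X : {set T}) (f : T -> nat) s :
  s <= #|X| -> s <= #|[set a in X | #|[set b in X | f a < f b]| < s]|.
Proof.
move=> sX; set Y := [set a in X | _]; rewrite leqNgt; apply/negP => Ys.
have : 0 < #|X :\: Y|.
  have := cardsD X Y; have : #|X :&: Y| <= #|Y| by apply: subset_leq_card; apply: subsetIr.
  lia.
case/card_gt0P => a0 Da0.
case: (@arg_maxnP _ a0 (fun a => a \in X :\: Y) f Da0) => a Da amax.
move: (Da); rewrite inE => /andP [aY aX].
have : a \in Y.
  rewrite inE aX /=; apply: leq_ltn_trans Ys; apply: subset_leq_card.
  apply/subsetP => b; rewrite inE => /andP [bX fab].
  apply/negPn/negP => bY.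
  have : b \in X :\: Y by rewrite inE bY bX.
  by move/amax => /= hh; lia.
by rewrite (negbTE aY).
Qed.

Lemma card_star (T : finType) (S : {set T}) (x : T) k : x \in S ->
  #|[set B : {set T} | (B \subset S) && (#|B| == k.+1) && (x \in B)]| = 'C(#|S|.-1, k).
Proof.
move=> xS.
have -> : #|S|.-1 = #|S :\ x| by rewrite (cardsD1 x S) xS.
rewrite -cards_draws.
have inj : {in [set B : {set T} | B \subset S :\ x & #|B| == k] &, injective (fun B => x |: B)}.
  move=> B C; rewrite !inE => /andP [BS _] /andP [CS _] e.
  have xB : x \notin B by apply/negP => /(subsetP BS); rewrite !inE eqxx.
  have xC : x \notin C by apply/negP => /(subsetP CS); rewrite !inE eqxx.
  by rewrite -(setU1K xB) -(setU1K xC) e.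
rewrite -(card_in_imset inj).
apply: eq_card => B; rewrite !inE; apply/idP/idP.
  move=> /andP [/andP [BS /eqP cB] xB]; apply/imsetP; exists (B :\ x); last by rewrite setD1K.
  rewrite inE; apply/andP; split; first by apply: setSD.
  by apply/eqP; move: cB; rewrite (cardsD1 x B) xB; lia.
case/imsetP => C; rewrite inE => /andP [CS /eqP cC] ->.
have xC : x \notin C by apply/negP => /(subsetP CS); rewrite !inE eqxx.
rewrite cardsU1 xC cC setU11 andbT eqxx andbT.
rewrite subUset sub1set xS /=; apply: subset_trans CS _; exact: subsetDl.
Qed.

Lemma card_lt_ord n m : m <= n -> #|[set i : 'I_n | i < m]| = m.
Proof.
move=> mn; rewrite -sum1dep_card -(big_ord_widen _ (fun _ => 1) mn).
by rewrite sum1_card card_ord.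
Qed.

Lemma sum_deg n (H : {set {set 'I_n}}) r : (forall e, e \in H -> #|e| = r) ->
  \sum_x deg H x = r * #|H|.
Proof.
move=> Hr; rewrite /deg.
under eq_bigr => x _ do rewrite -sum1dep_card big_mkcondr.
rewrite exchange_big /=.
under eq_bigr => e eH do rewrite -big_mkcond sum1_card Hr //.
by rewrite sum_nat_const mulnC.
Qed.

Lemma P2_le n (H : {set {set 'I_n}}) M : (forall x, deg H x <= M) ->
  P2 H <= M * \sum_x deg H x.
Proof.
move=> hM; rewrite /P2 big_distrr; apply: leq_sum => x _.
by rewrite expnS expn1 leq_mul2r hM orbT.
Qed.

Lemma colex_card n s r : #|colex_init n s r| <= s.
Proof.
set C := colex_init n s r.
case: (set_0Vmem C) => [->| [a0 Ca0]]; first by rewrite cards0.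
case: (@arg_maxnP _ a0 (fun A => A \in C) (@colex_code n) Ca0) => a Ca amax.
move: (Ca); rewrite inE => /andP [_ pa].
have : #|C :\ a| <= #|[set B : {set 'I_n} | (#|B| == r) && colex_lt B a]|.
  apply: subset_leq_card; apply/subsetP => b; rewrite in_setD1 => /andP [ba bC].
  have h := amax b bC; move: bC; rewrite inE => /andP [cb _].
  rewrite inE cb /= /colex_lt.
  move: h => /= h; rewrite ltn_neqAle h andbT; apply/negP => /eqP /colex_code_inj e.
  by rewrite e eqxx in ba.
rewrite (cardsD1 a C) Ca; lia.
Qed.

Lemma colex_sub n s r m : m <= n -> s <= 'C(m, r) ->
  forall A, A \in colex_init n s r -> A \subset [set i : 'I_n | i < m].
Proof.
move=> mn sm A; rewrite inE => /andP [/eqP cA hA]; apply/subsetP => i iA.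
rewrite inE ltnNge; apply/negP => mi.
have : 'C(m, r) <= #|[set B : {set 'I_n} | (#|B| == r) && colex_lt B A]|.
  rewrite -{1}(card_lt_ord mn) -cards_draws; apply: subset_leq_card.
  apply/subsetP => B; rewrite !inE => /andP [BS /eqP cB]; rewrite cB eqxx /= /colex_lt.
  have -> : colex_code B = \sum_(j < n | (j \in B) && (j < m)) 2 ^ j.
    rewrite /colex_code; apply: eq_bigl => j; case jB: (j \in B) => //=.
    by move: (subsetP BS j jB); rewrite inE => ->.
  apply: (leq_trans (sum_pow2_ord m (fun j => j \in B))).
  apply: (@leq_trans (2 ^ i)); first by rewrite leq_exp2l.
  by rewrite /colex_code (bigD1 i) //= leq_addr.
lia.
Qed.

Lemma colex_deg n s r m (x : 'I_n) : 0 < r -> m <= n -> s <= 'C(m, r) ->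
  deg (colex_init n s r) x <= 'C(m.-1, r.-1).
Proof.
move=> r0 mn sm; rewrite /deg.
set S := [set i : 'I_n | i < m].
case xS: (x \in S).
  have <- : #|S| = m by rewrite card_lt_ord.
  rewrite -(card_star (r.-1) xS) prednK //.
  apply: subset_leq_card; apply/subsetP => e /setIdP [eC xe]; rewrite !inE.
  rewrite xe andbT (colex_sub mn sm eC) /=.
  by move: eC; rewrite inE => /andP [].
suff -> : #|[set e in colex_init n s r | x \in e]| = 0 by [].
apply: eq_card0 => e; rewrite [e \in pred0]inE.
apply/negP => /setIdP [eC xe].
by move: (subsetP (colex_sub mn sm eC) x xe); rewrite xS.
Qed.

Lemma colex_P2 n s r m : 0 < r -> m <= n -> s <= 'C(m, r) ->
  P2 (colex_init n s r) <= 'C(m.-1, r.-1) * (r * s).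
Proof.
move=> r0 mn sm.
apply: (leq_trans (P2_le (fun x => colex_deg x r0 mn sm))).
rewrite leq_mul2l (@sum_deg _ _ r); first by rewrite leq_mul2l colex_card orbT orbT.
by move=> e; rewrite inE => /andP [/eqP ->].
Qed.

Lemma lex_pred_x0 t (x0 : 'I_t) (A B : {set 'I_t}) : val x0 = 0 -> x0 \in A ->
  lex_lt B A -> x0 \in B.
Proof.
move=> v0 x0A /existsP [y /and3P [yB yA /forallP agr]].
case: (posnP y) => hy.
  by have -> : x0 = y by apply: val_inj; rewrite /= v0 hy.
by move: (agr x0); rewrite v0 hy /= => /eqP ->.
Qed.

Lemma star_card t r (x : 'I_t) : 0 < r ->
  #|[set B : {set 'I_t} | (B \subset setT) && (#|B| == r) && (x \in B)]| = 'C(t.-1, r.-1).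
Proof.
move=> r0; have := card_star (r.-1) (in_setT x); rewrite prednK // cardsT card_ord //.
Qed.

Lemma lexL_deg0 s r t (x0 : 'I_t) : val x0 = 0 -> 0 < r -> s <= 'C(t.-1, r.-1) ->
  s <= deg (lexL s r t) x0.
Proof.
move=> v0 r0 sD.
set X := [set B : {set 'I_t} | (B \subset setT) && (#|B| == r) && (x0 \in B)].
have sX : s <= #|X| by rewrite star_card.
apply: (leq_trans (rank_lemma (@lcode t) sX)); apply: subset_leq_card.
apply/subsetP => a; rewrite inE => /andP [aX hr].
move: (aX); rewrite inE => /andP [/andP [_ ca] x0a].
apply/setIdP; split => //; rewrite inE ca /=.
apply: leq_ltn_trans hr; apply: subset_leq_card; apply/subsetP => B.
rewrite inE => /andP [cB lBa]; rewrite inE; apply/andP; split.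
  by rewrite inE subsetT cB /=; apply: lex_pred_x0 lBa.
exact: lex_code.
Qed.

Lemma card_Uk r t k : 0 < r ->
  #|[set B : {set 'I_t} | (#|B| == r) && [exists y : 'I_t, (y < k) && (y \in B)]]|
    <= k * 'C(t.-1, r.-1).
Proof.
move=> r0; elim: k => [|k IH].
  rewrite mul0n leqn0; apply/eqP; apply: eq_card0 => B; rewrite !inE.
  by apply/negP => /andP [_ /existsP [y]].
set V := [set B : {set 'I_t} | (#|B| == r) && [exists y : 'I_t, (y == k :> nat) && (y \in B)]].
have cV : #|V| <= 'C(t.-1, r.-1).
  case: (ltnP k t) => hk.
    rewrite -(star_card (Ordinal hk) r0); apply: subset_leq_card; apply/subsetP => B.
    rewrite !inE => /andP [-> /existsP [y /andP [/eqP yk yB]]].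
    by rewrite subsetT /=; have <- : y = Ordinal hk by apply: val_inj.
  suff -> : #|V| = 0 by [].
  apply: eq_card0 => B; rewrite !inE; apply/negP => /andP [_ /existsP [y /andP [/eqP yk _]]].
  by have := ltn_ord y; rewrite yk; lia.
apply: (@leq_trans (#|[set B : {set 'I_t} | (#|B| == r) && [exists y : 'I_t, (y < k) && (y \in B)]]| + #|V|)).
  apply: leq_trans (leq_card_setU _ _); apply: subset_leq_card; apply/subsetP => B.
  rewrite !inE => /andP [-> /existsP [y /andP [yk yB]]] /=.
  case: (ltngtP y k) => h.
  - by apply/orP; left; apply/existsP; exists y; rewrite h yB.
  - by lia.
  - by apply/orP; right; apply/existsP; exists y; rewrite h eqxx yB.
by rewrite mulSn addnC leq_add.
Qed.

Lemma lex_irr t (A : {set 'I_t}) : lex_lt A A = false.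
Proof.
apply/negbTE/negP; case/existsP => y /and3P [h1 h2 _]; by rewrite h1 in h2.
Qed.

Lemma star_in_lexL s r t k (x : 'I_t) : 0 < r -> k * 'C(t.-1, r.-1) <= s -> x < k ->
  forall A : {set 'I_t}, #|A| == r -> x \in A -> A \in lexL s r t.
Proof.
move=> r0 kD xk A cA xA; rewrite inE cA /=.
set U := [set B : {set 'I_t} | (#|B| == r) && [exists y : 'I_t, (y < k) && (y \in B)]].
have AU : A \in U by rewrite inE cA /=; apply/existsP; exists x; rewrite xk xA.
have : #|[set B : {set 'I_t} | (#|B| == r) && lex_lt B A]| <= #|U :\ A|.
  apply: subset_leq_card; apply/subsetP => B; rewrite !inE => /andP [cB lBA].
  apply/andP; split.
    by apply/negP => /eqP e; rewrite e lex_irr in lBA.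
  rewrite cB /=; move: lBA => /existsP [y /and3P [yB yA /forallP agr]].
  apply/existsP; case: (leqP y x) => h.
    by exists y; rewrite yB andbT; lia.
  exists x; rewrite xk /=; by move: (agr x); rewrite h /= => /eqP ->.
have := card_Uk t k r0; rewrite -/U (cardsD1 A U) AU /= add1n; move=> h1 h2; lia.
Qed.

Lemma lexL_P2 s r t k : 0 < r -> k <= t -> k * 'C(t.-1, r.-1) <= s ->
  k * 'C(t.-1, r.-1) ^ 2 <= P2 (lexL s r t).
Proof.
move=> r0 kt kD.
apply: (@leq_trans (\sum_(x : 'I_t | x < k) deg (lexL s r t) x ^ 2)); last first.
  rewrite /P2 [X in _ <= X](bigID (fun x : 'I_t => x < k)) /=; exact: leq_addr.
apply: (@leq_trans (\sum_(x : 'I_t | x < k) 'C(t.-1, r.-1) ^ 2)).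
  rewrite -{1}(card_lt_ord kt) -sum_nat_const; apply: eq_leq; apply: eq_bigl => x.
  by rewrite inE.
apply: leq_sum => x xk; rewrite leq_exp2r // /deg.
rewrite -(star_card x r0); apply: subset_leq_card; apply/subsetP => A.
rewrite inE => /andP [/andP [_ cA] xA]; apply/setIdP; split => //.
exact: (star_in_lexL r0 kD xk cA xA).
Qed.

Lemma ffact_cmp a t j : a <= t -> t ^ j * (a.-1) ^_ j <= a ^ j * (t.-1) ^_ j.
Proof.
move=> at_; elim: j => [|j IH]; first by rewrite !expn0 !ffactn0.
rewrite !ffactnSr !expnS.
have h : t * (a.-1 - j) <= a * (t.-1 - j) by nia.
have := leq_mul IH h.
nia.
Qed.

Lemma bin_cmp a t j : a <= t -> t ^ j * 'C(a.-1, j) <= a ^ j * 'C(t.-1, j).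
Proof.
move=> at_; rewrite -(leq_pmul2r (fact_gt0 j)) -!mulnA !bin_ffact.
exact: ffact_cmp.
Qed.

Lemma bin_big n k : 0 < k -> n < 'C(n + k, k).
Proof.
case: k => // k _; elim: k => [|k IH]; first by rewrite addn1 bin1.
by rewrite addnS binS; apply: (leq_trans IH); rewrite leq_addl.
Qed.

Lemma bin_strict N r : 0 < r -> r <= N -> 'C(N.-1, r) < 'C(N, r).
Proof.
move=> r0 rN; have N0 : 0 < N by apply: leq_trans rN.
rewrite -{2}(prednK N0) -(prednK r0) binS prednK // -[X in X < _]addn0 ltn_add2l bin_gt0.
by rewrite -ltnS !prednK.
Qed.

Section RealPart.
Local Open Scope R_scope.


Lemma beta_eq (r : nat) : (2 <= r)%N ->
  exists v, 0 < v /\ pow v (r.-1) = 12 * INR r /\ beta r = / (12 * INR r * v).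
Proof.
move=> r2.
have rR : 2 <= INR r by apply: (le_INR 2 r); apply/leP.
have x0 : 0 < 12 * INR r by lra.
exists (Rpower (12 * INR r) (/ (INR r - 1))); split; first by apply: exp_pos.
split.
  rewrite -Rpower_pow; last by apply: exp_pos.
  rewrite Rpower_mult.
  have -> : INR r.-1 = INR r - 1.
    rewrite -(prednK (ltn_trans (isT : (0 < 1)%N) r2)) S_INR /=; lra.
  rewrite Rinv_l; last lra.
  by rewrite Rpower_1.
rewrite /beta.
have -> : INR r / (INR r - 1) = 1 + / (INR r - 1) by field; lra.
by rewrite Rpower_Ropp Rpower_plus Rpower_1.
Qed.

Lemma key_real (r : nat) (A T P Dt : R) : (2 <= r)%N -> 0 <= A -> 0 < T -> 0 <= P -> 0 <= Dt ->
  pow T (r.-1) * P <= pow A (r.-1) * Dt ->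
  Dt < 12 * INR r * P ->
  A * P < beta r * T * Dt -> False.
Proof.
move=> r2 A0 T0 P0 D0 H1 H2 H3.
have rR : 2 <= INR r by apply: (le_INR 2 r); apply/leP.
case: (beta_eq r2) => v [v0 [vn be]].
have Pp : 0 < P by nra.
have TvA : T < v * A.
  apply: Rnot_le_lt => hle.
  have h := pow_incr (v * A) T (r.-1) (conj (Rmult_le_pos _ _ (Rlt_le _ _ v0) A0) hle).
  rewrite Rpow_mult_distr vn in h.
  have hA : 0 <= pow A r.-1 by apply: pow_le.
  have hT : 0 < pow T r.-1 by apply: pow_lt.
  have h5 := Rmult_le_compat_r P _ _ (Rlt_le _ _ Pp) h.
  have h6 : 0 < pow T r.-1 * P by apply: Rmult_lt_0_compat.
  case: (Rle_lt_or_eq_dec 0 _ hA) => hA'.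
    have h7 := Rmult_lt_compat_l _ _ _ hA' H2.
    lra.
  rewrite -hA' in H1; lra.
rewrite be in H3.
have hb : 0 < / (12 * INR r * v) by apply: Rinv_0_lt_compat; nra.
have H4 : / (12 * INR r * v) * T * Dt < / (12 * INR r * v) * T * (12 * INR r * P).
  apply: Rmult_lt_compat_l; nra.
replace (/ (12 * INR r * v) * T * (12 * INR r * P)) with (T * P / v) in H4 by (field; lra).
have : T * P / v < A * P.
  apply/(Rmult_lt_reg_r v) => //.
  have -> : T * P / v * v = T * P by field; lra.
  nra.
lra.
Qed.


Lemma INR_expn (x n : nat) : INR (x ^ n)%N = pow (INR x) n.
Proof.
elim: n => [|n IH]; first by rewrite expn0.
by rewrite expnS mult_INR IH.
Qed.

Lemma beta_bounds r : (2 <= r)%N -> 0 < beta r /\ beta r < 1.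
Proof.
move=> r2; have rR : 2 <= INR r by apply: (le_INR 2 r); apply/leP.
case: (beta_eq r2) => v [v0 [vn ->]].
have v1 : 1 <= v.
  apply: Rnot_lt_le => hv.
  have := pow_incr v 1 r.-1 (conj (Rlt_le _ _ v0) (Rlt_le _ _ hv)).
  rewrite pow1 vn; lra.
split; first by apply: Rinv_0_lt_compat; nra.
rewrite -Rinv_1; apply: Rinv_lt_contravar; nra.
Qed.

Lemma INR12 : INR 12 = 12.
Proof. by rewrite INR_IZR_INZ. Qed.

Lemma key_nat r t a : (2 <= r)%N -> (a <= t)%N -> (0 < t)%N ->
  INR 'C(a, r) < beta r * INR 'C(t, r) ->
  (12 * r * 'C(a.-1, r.-1) <= 'C(t.-1, r.-1))%N.
Proof.
move=> r2 at_ t0 hlt.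
rewrite leqNgt; apply/negP => hD.
have r0 : (0 < r)%N by lia.
apply: (@key_real r (INR a) (INR t) (INR 'C(a.-1, r.-1)) (INR 'C(t.-1, r.-1))) => //.
- exact: pos_INR.
- by apply: lt_0_INR; apply/ltP.
- exact: pos_INR.
- exact: pos_INR.
- rewrite -!INR_expn -!mult_INR multE; apply: le_INR; apply/leP; exact: bin_cmp.
- have := lt_INR _ _ (elimT ltP hD); rewrite !mult_INR INR12; lra.
- have eA : INR a * INR 'C(a.-1, r.-1) = INR r * INR 'C(a, r).
    by rewrite -!mult_INR multE mul_bin_diag prednK.
  rewrite eA.
  have e : INR t * INR 'C(t.-1, r.-1) = INR r * INR 'C(t, r).
    by rewrite -!mult_INR multE mul_bin_diag prednK.
  have rR : 0 < INR r by apply: lt_0_INR; apply/ltP.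
  rewrite Rmult_assoc e; nra.
Qed.

Lemma final_conv (a b : nat) : (2 * a <= b)%N -> Rle (INR a) (Rmult (Rinv 2) (INR b)).
Proof.
move=> h; have := le_INR _ _ (elimT leP h); rewrite mult_INR.
have -> : INR 2 = 2 by [].
lra.
Qed.

Lemma real_facts r t s : (2 <= r)%N -> (0 < s)%N ->
  Rle (INR s) (Rmult (beta r) (INR 'C(t, r))) -> (s < 'C(t, r))%N.
Proof.
move=> r2 s0 hR; have [b0 b1] := beta_bounds r2.
have hs : 0 < INR s by apply: lt_0_INR; apply/ltP.
have hC : 0 <= INR 'C(t, r) by apply: pos_INR.
apply/ltP; apply: INR_lt; nra.
Qed.

End RealPart.

From mathcomp Require Import ssralg ring.

Lemma arithA r m s P2C P2L : 2 <= r -> 8 * r ^ 2 <= m ->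
  (m - r) * P2C <= r ^ 2 * s ^ 2 -> s ^ 2 <= P2L -> 2 * P2C <= P2L.
Proof.
move=> r2 m8 h1 h2.
have rr : 0 < r ^ 2 by rewrite expn_gt0; lia.
rewrite -(leq_pmul2l rr).
apply: (@leq_trans ((m - r) * P2C)).
  rewrite mulnA; apply: leq_mul => //; nia.
apply: (leq_trans h1); by rewrite leq_mul2l h2 orbT.
Qed.

Lemma arithB r m s k D Cm Q R2 P2C P2L :
  2 <= r -> 8 * r ^ 2 <= m -> s <= Cm -> r * Cm = m * Q -> (m - r) * Q = m.-1 * R2 ->
  12 * r * R2 <= D -> s < k.+1 * D -> 0 < k -> k * D ^ 2 <= P2L ->
  (m - r) * P2C <= r ^ 2 * s ^ 2 -> 2 * P2C <= P2L.
Proof.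
move=> r2 m8 sC f1 f2 key sk k0 hL hC.
have mr0 : 0 < m - r by nia.
have g1 : 4 * r ^ 2 * s <= (m - r) * D.
  have mr3 : 0 < 3 * (m - r) by lia.
  rewrite -(leq_pmul2l mr3).
  apply: (@leq_trans (3 * (m - r) * (4 * r ^ 2 * Cm))).
    by rewrite leq_mul2l leq_mul2l sC !orbT.
  have -> : 3 * (m - r) * (4 * r ^ 2 * Cm) = 12 * (m - r) * r * (r * Cm) by ring.
  rewrite f1.
  have -> : 12 * (m - r) * r * (m * Q) = 12 * r * m * ((m - r) * Q) by ring.
  rewrite f2.
  have -> : 12 * r * m * (m.-1 * R2) = m * m.-1 * (12 * r * R2) by ring.
  apply: (@leq_trans (m * m.-1 * D)); first by rewrite leq_mul2l key orbT.
  have h16 : 16 * r <= m by nia.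
  have h15 : 15 * m <= 16 * (m - r) by lia.
  have h225 := leq_mul h15 h15.
  have f5 : m * m.-1 <= 3 * (m - r) * (m - r) by nia.
  apply: (leq_trans (leq_mul f5 (leqnn D))).
  by rewrite -!mulnA.
have g2 : 2 * s <= 4 * (k * D) by nia.
have g3 : 2 * (r ^ 2 * s ^ 2) <= (m - r) * (k * D ^ 2).
  have -> : 2 * (r ^ 2 * s ^ 2) = (r ^ 2 * s) * (2 * s) by ring.
  apply: (@leq_trans ((r ^ 2 * s) * (4 * (k * D)))); first by rewrite leq_mul2l g2 orbT.
  have -> : r ^ 2 * s * (4 * (k * D)) = (4 * r ^ 2 * s) * (k * D) by ring.
  have -> : (m - r) * (k * D ^ 2) = ((m - r) * D) * (k * D) by ring.
  by rewrite leq_mul2r g1 orbT.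
rewrite -(leq_pmul2l mr0).
apply: (@leq_trans (2 * ((m - r) * P2C))); first by rewrite mulnCA.
apply: (@leq_trans (2 * (r ^ 2 * s ^ 2))); first by rewrite leq_mul2l hC orbT.
apply: (leq_trans g3); by rewrite leq_mul2l hL orbT.
Qed.

Theorem proposition6p3 (r t s : nat) :
  2 <= r -> 0 < t -> 0 < s ->
  'C(8 * r ^ 2, r) <= s ->
  (Rle (INR s) (Rmult (beta r) (INR 'C(t, r)))) ->
  (Rle (INR (P2 (colexC s r))) (Rmult (Rinv 2) (INR (P2 (lexL s r t))))).
Proof.
move=> r2 t0 s0 hs hR.
have r0 : 0 < r by lia.
apply: final_conv.
have ex : exists m, (fun m => s <= 'C(m, r)) m by exists (s + r); exact: ltnW (bin_big s r0).
case: (find_ex_minn ex) => m sm mmin.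
have mn : m <= s + r := mmin _ (ltnW (bin_big s r0)).
have m8 : 8 * r ^ 2 <= m.
  rewrite leqNgt; apply/negP => hm.
  have h1 : 'C(m, r) <= 'C((8 * r ^ 2).-1, r) by apply: leq_bin2l; lia.
  have h2 : 'C((8 * r ^ 2).-1, r) < 'C(8 * r ^ 2, r) by apply: bin_strict => //; nia.
  lia.
have m1 : 'C(m.-1, r) < s.
  rewrite ltnNge; apply/negP => h; have := mmin _ h; lia.
set P2C := P2 (colexC s r).
set P2L := P2 (lexL s r t).
have hC : P2C <= 'C(m.-1, r.-1) * (r * s) by exact: colex_P2 r0 mn sm.
have idQ : r * 'C(m.-1, r) = (m - r) * 'C(m.-1, r.-1).
  have := mul_bin_left (m.-1) (r.-1); rewrite prednK // => ->; congr (_ * _); lia.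
have hC2 : (m - r) * P2C <= r ^ 2 * s ^ 2.
  apply: (@leq_trans ((m - r) * ('C(m.-1, r.-1) * (r * s)))); first by rewrite leq_mul2l hC orbT.
  rewrite mulnA -idQ.
  have -> : r ^ 2 * s ^ 2 = (r * s) * (r * s) by ring.
  apply: leq_mul => //; by rewrite leq_mul2l ltnW ?orbT.
have sCt : s < 'C(t, r) := real_facts r2 s0 hR.
have rt : r <= t by rewrite -bin_gt0; lia.
set D := 'C(t.-1, r.-1).
have D0 : 0 < D by rewrite bin_gt0; lia.
have tD : r * 'C(t, r) = t * D by rewrite /D mul_bin_diag prednK.
case: (leqP s D) => sD.
  have hdeg := @lexL_deg0 s r t (Ordinal t0) erefl r0 sD.
  have hL : s ^ 2 <= P2L.
    rewrite /P2L /P2 (bigD1 (Ordinal t0)) //=.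
    apply: leq_trans (leq_addr _ _); by rewrite leq_exp2r.
  exact: arithA r2 m8 hC2 hL.
set k := s %/ D.
have kD : k * D <= s by apply: leq_trunc_div.
have sk : s < k.+1 * D by apply: ltn_ceil.
have k1 : 0 < k by rewrite divn_gt0 // ltnW.
have kt : k <= t.
  have : k * D < t * D by nia.
  by rewrite ltn_pmul2r // => /ltnW.
have hL := lexL_P2 r0 kt kD.
have am : m.-1 < t.
  rewrite ltnNge; apply/negP => h.
  have := leq_bin2l r h; lia.
have key : 12 * r * 'C(m.-2, r.-1) <= D.
  apply: (@key_nat r t (m.-1)) => //; first exact: ltnW.
  apply: (Rlt_le_trans _ (INR s)) => //.
  by apply: lt_INR; apply/ltP.
have f1 : r * 'C(m, r) = m * 'C(m.-1, r.-1).
  by rewrite mul_bin_diag prednK.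
have f2 : (m - r) * 'C(m.-1, r.-1) = m.-1 * 'C(m.-2, r.-1).
  rewrite mul_bin_down; congr (_ * _); lia.
exact: arithB r2 m8 sm f1 f2 key sk k1 hL hC2.
Qed.
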